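(* Let $\mathcal{X}$ be a finite set of actions, $\mathcal{Y}$ a finite set of responses, $\mathcal{H}\subseteq\mathcal{Y}^{\mathcal{X}}$, $\mathrm{cost}:\mathcal{X}\times\mathcal{Y}\to\mathbb{R}_+$. Let $f:2^{\mathcal{X}\times\mathcal{Y}}\to\mathbb{R}_+$, $Q>0$, $\eta>0$ be such that $f$ is monotone non-decreasing and submodular, $f(\emptyset)=0$, for every $S$, $f(S)\ge Q-\eta$ implies $f(S)\ge Q$, and $f$ is consistency-aware for $Q$. Let $\alpha\ge1$ and let $\mathcal{A}$ be an $\alpha$-approximate greedy algorithm for the utility function $u^f$. Then $$\mathrm{cost}(\mathcal{A})\le 2\min(g_{\mathrm{cost}},R_{\mathrm{cost}})\cdot\alpha\cdot(\log(Q/\eta)+1)\cdot\mathrm{OPT}.$$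
   Context: The true state is an unknown $h^*\in\mathcal{H}$. An interactive algorithm $\mathcal{A}$, given the set $S$ of pairs observed so far, outputs either an action $\mathcal{A}(S)\in\mathcal{X}$ (yielding $(x,h^*(x))$, added to $S$) or terminates. $S^h[\mathcal{A}]$ is the set collected until termination when $h^*=h$; $\mathrm{cost}(S)=\sum_{(x,y)\in S}\mathrm{cost}(x,y)$; $\mathrm{cost}(\mathcal{A})=\max_{h\in\mathcal{H}}\mathrm{cost}(S^h[\mathcal{A}])$; $\mathrm{OPT}$ is the minimum of $\mathrm{cost}(\mathcal{A})$ over interactive algorithms with $f(S^h[\mathcal{A}])\ge Q$ for all $h\in\mathcal{H}$ ($\infty$ if none). Version space $V(S)=\{h\in\mathcal{H}\mid\forall(x,y)\in S,\ y=h(x)\}$. $f$ is consistency-aware for $Q$ if $f(S)\ge Q$ whenever $V(S)=\emptyset$. $\delta_g(z\mid A)=g(A\cup\{z\})-g(A)$; $u^f(x,S)=\min_{h\in V(S)}\frac{\delta_{\min(f,Q)}((x,h(x))\mid S)}{\mathrm{cost}(x,h(x))}$. $\mathcal{A}$ is an $\alpha$-approximate greedy algorithm for $u$ if for all $S$: if $f(S)\ge Q$ then $\mathcal{A}$ terminates on $S$, otherwise $\mathcal{A}(S)\in\mathcal{X}$ and $u(\mathcal{A}(S),S)\ge\frac1\alpha\max_{x}u(x,S)$. Cost ratio $R_{\mathrm{cost}}=\max_x\frac{\max_y\mathrm{cost}(x,y)}{\min_y\mathrm{cost}(x,y)}$. With $\phi(x)$ the second-smallest value of the multiset $\{\mathrm{cost}(x,y)\mid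 y\in\mathcal{Y}\}$, $\phi_{\min}=\min_x\phi(x)$, $c_{\max}=\max_{(x,y)}\mathrm{cost}(x,y)$, the global second-smallest cost ratio is $g_{\mathrm{cost}}=c_{\max}/\phi_{\min}$. *)

(* Defs.v *)
From HB Require Import structures.
From mathcomp Require Import all_boot all_order all_algebra.
From mathcomp Require Import boolp reals exp.
Set Implicit Arguments. Unset Strict Implicit. Unset Printing Implicit Defensive.
Import Order.TTheory GRing.Theory Num.Theory.
Local Open Scope ring_scope.

Section Interactive.
Variables (R : realType) (X Y : finType).

(* minimum / maximum of a finite list of reals (value 0 on the empty list;
   every use below is on a nonempty list or irrelevant) *)
Definition minseq (s : seq R) : R := foldr Num.min (head 0 s) s.
Definition maxseq (s : seq R) : R := foldr Num.max (head 0 s) s.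

(* an interactive algorithm: given the set S of observed pairs, either an
   action (Some x) or termination (None) *)
Definition algo := {set X * Y} -> option X.

Fixpoint run (A : algo) (h : {ffun X -> Y}) (k : nat) : {set X * Y} :=
  match k with
  | 0 => set0
  | k'.+1 => let S := run A h k' in
             match A S with
             | Some x => (x, h x) |: S
             | None => S
             end
  end.

Definition terminates_on (A : algo) (h : {ffun X -> Y}) : Prop :=
  exists k, A (run A h k) == None.

(* S^h[A]: the set collected until termination (setT is a junk value used
   only when A never terminates on h) *)
Definition Sh (A : algo) (h : {ffun X -> Y}) : {set X * Y} :=
  match pselect (terminates_on A h) with
  | left P => run A h (ex_minn P)
  | right _ => setT
  end.

Variable cost : X -> Y -> R.
Variable H : {set {ffun X -> Y}}.

Definition costS (S : {set X * Y}) : R := \sum_(p in S) cost p.1 p.2.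

Definition costA (A : algo) : R := maxseq [seq costS (Sh A h) | h <- enum H].

Definition terminates (A : algo) : Prop := forall h, h \in H -> terminates_on A h.

Definition feasible (f : {set X * Y} -> R) (Q : R) (A : algo) : Prop :=
  terminates A /\ forall h, h \in H -> Q <= f (Sh A h).

Definition V (S : {set X * Y}) : {set {ffun X -> Y}} :=
  [set h in H | [forall p in S, h p.1 == p.2]].

Definition consistency_aware (f : {set X * Y} -> R) (Q : R) : Prop :=
  forall S, V S = set0 -> Q <= f S.

Definition monotone (f : {set X * Y} -> R) : Prop :=
  forall A B : {set X * Y}, A \subset B -> f A <= f B.

Definition delta (g : {set X * Y} -> R) (z : X * Y) (A : {set X * Y}) : R :=
  g (z |: A) - g A.

Definition submodular (f : {set X * Y} -> R) : Prop :=
  forall (A B : {set X * Y}) (z : X * Y), A \subset B -> z \notin B ->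
    delta f z B <= delta f z A.

Definition utility (f : {set X * Y} -> R) (Q : R) (x : X) (S : {set X * Y}) : R :=
  minseq [seq delta (fun T => Num.min (f T) Q) (x, h x) S / cost x (h x)
         | h : {ffun X -> Y} <- enum (V S)].

Definition approx_greedy (f : {set X * Y} -> R) (Q alpha : R)
    (u : X -> {set X * Y} -> R) (A : algo) : Prop :=
  forall S : {set X * Y},
    (Q <= f S -> A S = None) /\
    (f S < Q -> exists x, A S = Some x /\
        alpha^-1 * maxseq [seq u y S | y <- enum X] <= u x S).

Definition R_cost : R :=
  maxseq [seq maxseq [seq cost x y | y <- enum Y] /
              minseq [seq cost x y | y <- enum Y] | x <- enum X].

Definition phi (x : X) : R := nth 0 (sort <=%R [seq cost x y | y <- enum Y]) 1.
Definition phi_min : R := minseq [seq phi x | x <- enum X].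
Definition c_max : R := maxseq [seq cost p.1 p.2 | p <- enum [set: X * Y]].
Definition g_cost : R := c_max / phi_min.

End Interactive.

(* Main.v *)
Require Import Defs.
From HB Require Import structures.
From mathcomp Require Import all_boot all_order all_algebra.
From mathcomp Require Import boolp reals exp.
From mathcomp Require Import sequences.
From mathcomp Require Import lra ring.
Import Order.TTheory GRing.Theory Num.Theory.
Local Open Scope ring_scope.

Section Seqs.
Set Implicit Arguments. Unset Strict Implicit.
Variable R : realType.

Lemma foldr_max_ge (a x : R) s : x \in s -> x <= foldr Num.max a s.
Proof.
elim: s => //= y s IH; rewrite in_cons => /orP [/eqP ->|/IH]; rewrite le_max ?lexx //.
by move=> ->; rewrite orbT.
Qed.

Lemma maxseq_ge (x : R) s : x \in s -> x <= maxseq s.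
Proof. exact: foldr_max_ge. Qed.

Lemma foldr_max_le (a B : R) s : a <= B -> (forall x, x \in s -> x <= B) ->
  foldr Num.max a s <= B.
Proof.
move=> aB; elim: s => //= y s IH Hs; rewrite ge_max Hs ?mem_head //=.
by apply: IH => x xs; apply: Hs; rewrite in_cons xs orbT.
Qed.

Lemma maxseq_le (B : R) s : 0 <= B -> (forall x, x \in s -> x <= B) -> maxseq s <= B.
Proof.
move=> B0 Hs; apply: foldr_max_le => //; case: s Hs => //= y s Hs.
by apply: Hs; rewrite mem_head.
Qed.

Lemma foldr_min_le (a x : R) s : x \in s -> foldr Num.min a s <= x.
Proof.
elim: s => //= y s IH; rewrite in_cons => /orP [/eqP ->|/IH]; rewrite ge_min ?lexx //.
by move=> ->; rewrite orbT.
Qed.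

Lemma minseq_le (x : R) s : x \in s -> minseq s <= x.
Proof. exact: foldr_min_le. Qed.

Lemma foldr_min_ge (a B : R) s : B <= a -> (forall x, x \in s -> B <= x) ->
  B <= foldr Num.min a s.
Proof.
move=> aB; elim: s => //= y s IH Hs; rewrite le_min Hs ?mem_head //=.
by apply: IH => x xs; apply: Hs; rewrite in_cons xs orbT.
Qed.

Lemma minseq_ge (B : R) s : B <= 0 -> (forall x, x \in s -> B <= x) -> B <= minseq s.
Proof.
move=> B0 Hs; apply: foldr_min_ge => //; case: s Hs => //= y s Hs.
by apply: Hs; rewrite mem_head.
Qed.

Lemma minseq_ge' (B : R) s : s != [::] -> (forall x, x \in s -> B <= x) -> B <= minseq s.
Proof.
move=> sn Hs; apply: foldr_min_ge => //; case: s sn Hs => //= y s _ Hs.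
by apply: Hs; rewrite mem_head.
Qed.

Lemma foldr_min_mem (a : R) s : foldr Num.min a s \in a :: s.
Proof.
elim: s => [|y s IH] /=; first by rewrite mem_head.
rewrite /Num.min; case: ifP => _; first by rewrite !in_cons eqxx orbT.
move: IH; rewrite !in_cons => /orP [->//|->]; by rewrite !orbT.
Qed.

Lemma minseq_mem (s : seq R) : s != [::] -> minseq s \in s.
Proof.
case: s => // y s _; have := foldr_min_mem y (y :: s).
by rewrite /minseq /= in_cons => /orP [/eqP ->|//]; rewrite mem_head.
Qed.

End Seqs.

Section Runs.
Set Implicit Arguments. Unset Strict Implicit.
Variables (X Y : finType).
Implicit Types (A : algo X Y) (h g : {ffun X -> Y}).

Lemma run_S A h k : run A h k.+1 =
  match A (run A h k) with Some x => (x, h x) |: run A h k | None => run A h k end.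
Proof. by []. Qed.

Lemma run_sub1 A h k : run A h k \subset run A h k.+1.
Proof. by rewrite run_S; case: (A _) => // x; apply: subsetUr. Qed.

Lemma run_sub A h j k : (j <= k)%N -> run A h j \subset run A h k.
Proof.
move=> /subnK <-; elim: (k - j)%N => [|n IH] //.
by rewrite addSn; apply: subset_trans IH (run_sub1 _ _ _).
Qed.

Lemma run_pairs A h k p : p \in run A h k -> p.2 = h p.1.
Proof.
elim: k => [|k IH] /=; first by rewrite inE.
case: (A _) => // x; rewrite in_setU1 => /orP [/eqP -> //|]; exact: IH.
Qed.

Lemma run_some A h k x : A (run A h k) = Some x -> run A h k.+1 = (x, h x) |: run A h k.
Proof. by rewrite run_S => ->. Qed.

Lemma run_agree A g h k : (forall p, p \in run A g k -> h p.1 = p.2) ->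
  forall j, (j <= k)%N -> run A h j = run A g j.
Proof.
move=> Hc; elim=> [|j IH] // jk.
rewrite !run_S IH ?(ltnW jk) //; case E: (A _) => [x|] //.
have : (x, g x) \in run A g k.
  apply: (subsetP (run_sub A g jk)); rewrite run_S E; exact: setU11.
by move/Hc => /= ->.
Qed.

Lemma Sh_spec A h : terminates_on A h ->
  exists m, [/\ Sh A h = run A h m, A (run A h m) = None &
    forall j, (j < m)%N -> A (run A h j) != None].
Proof.
move=> T; rewrite /Sh; case: pselect => // P.
case: ex_minnP => m /eqP Hm Hmin; exists m; split => // j jm; apply/negP => /eqP Hj.
by have := Hmin j (introT eqP Hj); rewrite leqNgt jm.
Qed.

Lemma Sh_eq A h k : A (run A h k) = None ->
  (forall j, (j < k)%N -> A (run A h j) != None) -> Sh A h = run A h k.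
Proof.
move=> Hk Hj; have T : terminates_on A h by exists k; rewrite Hk.
have [m [-> Hm Hmj]] := Sh_spec T.
case: (ltngtP m k) => [mk|km|-> //].
  by have := Hj m mk; rewrite Hm.
by have := Hmj k km; rewrite Hk.
Qed.

Lemma Sh_sup A h n : terminates_on A h ->
  (forall j, (j < n)%N -> A (run A h j) != None) -> run A h n \subset Sh A h.
Proof.
move=> T Hj; have [m [-> Hm Hmj]] := Sh_spec T; apply: run_sub.
rewrite leqNgt; apply/negP => /Hj; by rewrite Hm.
Qed.

Lemma first_disagree A g h k : ~ (forall p, p \in run A g k -> h p.1 = p.2) ->
  exists j x, [/\ (j < k)%N, A (run A g j) = Some x,
    (forall p, p \in run A g j -> h p.1 = p.2) & h x != g x].
Proof.
elim: k => [|k IH] Hn.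
  by exfalso; apply: Hn => p; rewrite inE.
case: (pselect (forall p, p \in run A g k -> h p.1 = p.2)) => Hk; last first.
  have [j [x [jk Hx Hc Hne]]] := IH Hk; exists j, x; split => //; exact: ltnW.
exists k; move: Hn; rewrite run_S; case E: (A _) => [x|]; last by [].
move=> Hn; exists x; split => //; apply/eqP => hx; apply: Hn => p.
by rewrite in_setU1 => /orP [/eqP -> /=|/Hk].
Qed.

End Runs.

Section Costs.
Set Implicit Arguments. Unset Strict Implicit.
Variables (R : realType) (X Y : finType) (cost : X -> Y -> R).
Implicit Types (S T : {set X * Y}) (z : X * Y).
Hypothesis cpos : forall x y, 0 < cost x y.

Lemma costS_ge0 S : 0 <= costS cost S.
Proof. by apply: sumr_ge0 => p _; apply: ltW. Qed.

Lemma costS_sub S T : S \subset T -> costS cost S <= costS cost T.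
Proof.
move=> ST; rewrite /costS [X in _ <= X](big_setID S) /= (setIidPr ST) lerDl.
by apply: sumr_ge0 => p _; apply: ltW.
Qed.

Lemma costS_U1 z S : z \notin S -> costS cost (z |: S) = cost z.1 z.2 + costS cost S.
Proof. by move=> zS; rewrite /costS big_setU1. Qed.

Lemma costS_U1_le z S : costS cost (z |: S) <= cost z.1 z.2 + costS cost S.
Proof.
case: (boolP (z \in S)) => zS; last by rewrite costS_U1.
by rewrite (setUidPr _) ?sub1set // lerDr ltW.
Qed.

Lemma costS_mem z S : z \in S -> cost z.1 z.2 <= costS cost S.
Proof.
move=> zS; have := costS_sub (S := [set z]) (T := S); rewrite sub1set zS => /(_ isT).
by rewrite /costS big_set1.
Qed.

Hypothesis Y2 : (1 < #|Y|)%N.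

Lemma phi_two x y y' : y != y' -> phi cost x <= cost x y \/ phi cost x <= cost x y'.
Proof.
move=> yy'; case: (leP (phi cost x) (cost x y)) => h1; first by left.
case: (leP (phi cost x) (cost x y')) => h2; first by right.
exfalso.
set L := [seq cost x y0 | y0 <- enum Y].
set s := sort <=%R L.
pose p := fun c : R => c < phi cost x.
have cL : (2 <= count p L)%N.
  rewrite /L count_map.
  have yin : y \in enum Y by rewrite mem_enum.
  rewrite (permP (perm_to_rem yin)) /=.
  have y'in : y' \in rem y (enum Y) by rewrite mem_rem_uniq ?enum_uniq // inE eq_sym yy' mem_enum.
  rewrite (permP (perm_to_rem y'in)) /= /preim /p h1 h2.
  by [].
have cs : count p s = count p L by rewrite count_sort.
have sz : size s = #|Y| by rewrite size_sort size_map -cardE.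
have ss : sorted <=%R s by apply: sort_sorted; exact: le_total.
have phis : phi cost x = nth 0 s 1 by [].
move: cs sz ss phis; case: s => [|a [|b t]] /=; try by move=> _ sz; move: Y2; rewrite -sz.
move=> cs _ /andP [_ pt] phib.
have allt := order_path_min (@le_trans _ R) pt.
have H0 : count p t = 0%N.
  apply/eqP; rewrite -leqn0 leqNgt -has_count; apply/hasP => [[c ct]].
  move/allP: allt => /(_ c ct); rewrite /p -phib => bc cb.
  by move: (lt_le_trans cb bc); rewrite ltxx.
move: cL; rewrite -cs /= H0 /p -phib ltxx /= addn0.
by rewrite addn0 ltnNge leq_b1.
Qed.


Let Lx x := [seq cost x y0 | y0 <- enum Y].

Lemma Lx_nil x : Lx x != [::].
Proof.
rewrite /Lx; apply/eqP => /(congr1 size); rewrite size_map -cardE => E.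
by move: Y2; rewrite E.
Qed.

Lemma minLx_pos x : 0 < minseq (Lx x).
Proof.
have := minseq_mem (Lx_nil x); rewrite /Lx => /mapP [y _ ->]; exact: cpos.
Qed.

Lemma cost_in x y : cost x y \in Lx x.
Proof. by apply: map_f; rewrite mem_enum. Qed.

Lemma R_cost_le x y y' : cost x y <= R_cost cost * cost x y'.
Proof.
set mx := maxseq (Lx x); set mn := minseq (Lx x).
have mn0 := minLx_pos x.
have h1 : cost x y <= mx by apply: maxseq_ge; apply: cost_in.
have h2 : mn <= cost x y' by apply: minseq_le; apply: cost_in.
have h3 : mx / mn <= R_cost cost.
  by apply: maxseq_ge; apply/mapP; exists x; rewrite ?mem_enum.
have mx0 : 0 <= mx by apply: le_trans h1; apply: ltW.
apply: (le_trans h1); apply: (@le_trans _ _ (mx / mn * cost x y')).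
  rewrite -{1}(divfK (lt0r_neq0 mn0) mx); apply: ler_wpM2l => //; by rewrite divr_ge0 // ltW.
by rewrite ler_wpM2r // ltW.
Qed.

Lemma R_cost_ge1 (x0 : X) : 1 <= R_cost cost.
Proof.
have [y0 _] : exists y : Y, true.
  by move: Y2; case: (pickP (@predT Y)) => [y|/eq_card0 ->] //; exists y.
have := R_cost_le x0 y0 y0; rewrite ler_pMl //.
Qed.

Lemma c_max_ge x y : cost x y <= c_max cost.
Proof.
apply: maxseq_ge; apply/mapP; exists (x, y) => //; by rewrite mem_enum inE.
Qed.

Lemma phi_mem x : exists y, phi cost x = cost x y.
Proof.
rewrite /phi; set s := sort _ _.
have : nth 0 s 1 \in s.
  by apply: mem_nth; rewrite size_sort size_map -cardE.
by rewrite mem_sort => /mapP [y _ ->]; exists y.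
Qed.

Lemma phi_min_le x : phi_min cost <= phi cost x.
Proof. by apply: minseq_le; apply: map_f; rewrite mem_enum. Qed.

Lemma phi_min_mem (x0 : X) : exists x, phi_min cost = phi cost x.
Proof.
have : [seq phi cost x | x <- enum X] != [::].
  by case E: (enum X) => //; move: (mem_enum X x0); rewrite E inE.
by rewrite /phi_min; move/minseq_mem => /mapP [x _ ->]; exists x.
Qed.

Lemma phi_min_pos (x0 : X) : 0 < phi_min cost.
Proof.
have [x ->] := phi_min_mem x0; have [y ->] := phi_mem x; exact: cpos.
Qed.

Lemma g_cost_ge1 (x0 : X) : 1 <= g_cost cost.
Proof.
rewrite /g_cost ler_pdivlMr ?mul1r ?phi_min_pos //.
have [x ->] := phi_min_mem x0; have [y ->] := phi_mem x; exact: c_max_ge.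
Qed.

Lemma c_max_g (x0 : X) : c_max cost = g_cost cost * phi_min cost.
Proof. rewrite /g_cost divfK //; apply: lt0r_neq0; exact: phi_min_pos. Qed.

End Costs.

Section Sub.
Set Implicit Arguments. Unset Strict Implicit.
Variables (R : realType) (X Y : finType) (f : {set X * Y} -> R) (Q : R).
Implicit Types (S T : {set X * Y}) (z : X * Y).
Hypothesis fmon : monotone f.
Hypothesis fsub : submodular f.

Local Notation fq := (fun T => Num.min (f T) Q).

Lemma fq_mon S T : S \subset T -> fq S <= fq T.
Proof.
move=> /fmon; rewrite /fq !minEle; case: ifP; case: ifP => ? ? ?; lra.
Qed.

Lemma delta_fq_ge0 z S : 0 <= delta fq z S.
Proof. by rewrite /delta subr_ge0; apply: fq_mon; apply: subsetUr. Qed.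

Lemma fq_submod S T z : S \subset T -> z \notin T -> delta fq z T <= delta fq z S.
Proof.
move=> ST zT; have h := fsub ST zT; move: h; rewrite /delta /fq.
have h1 := fmon ST.
have h2 : f (z |: S) <= f (z |: T) by apply: fmon; apply: setUS.
have h3 : f S <= f (z |: S) by apply: fmon; apply: subsetUr.
have h4 : f T <= f (z |: T) by apply: fmon; apply: subsetUr.
rewrite !minEle; do 4 (case: ifP => ?); move=> ?; lra.
Qed.

Lemma fq_sum_seq S (s : seq (X * Y)) : uniq s ->
  fq (S :|: [set z in s]) - fq S <= \sum_(z <- s) delta fq z S.
Proof.
elim: s => [|z s IH] /=.
  by rewrite big_nil (_ : [set z in [::]] = set0) ?setU0 ?subrr //; apply/setP => z; rewrite !inE.
move=> /andP [zs us]; rewrite big_cons.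
have -> : [set z0 in z :: s] = z |: [set z0 in s] by apply/setP => w; rewrite !inE.
have IH' := IH us.
rewrite setUCA.
have : fq (z |: (S :|: [set z0 in s])) - fq (S :|: [set z0 in s]) <= delta fq z S.
  case: (boolP (z \in S :|: [set z0 in s])) => zin.
    rewrite (setUidPr _) ?sub1set // subrr; exact: delta_fq_ge0.
  apply: (fq_submod (S := S)) => //; exact: subsetUl.
move=> h; lra.
Qed.

Lemma fq_sum S T : fq (S :|: T) - fq S <= \sum_(z in T) delta fq z S.
Proof.
rewrite -big_enum /=; have := fq_sum_seq S (enum_uniq (pred_of_set T)).
by rewrite (_ : [set z in enum T] = T) //; apply/setP => z; rewrite inE mem_enum.
Qed.

End Sub.

Section Main.
Set Implicit Arguments. Unset Strict Implicit.
Variables (R : realType) (X Y : finType)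
  (H : {set {ffun X -> Y}}) (cost : X -> Y -> R)
  (f : {set X * Y} -> R) (Q eta alpha : R) (A A' : algo X Y).
Implicit Types (S T : {set X * Y}) (z : X * Y) (h g : {ffun X -> Y}).
Hypotheses (Y2 : (1 < #|Y|)%N) (cpos : forall x y, 0 < cost x y)
  (fge0 : forall S, 0 <= f S) (Qpos : 0 < Q) (etapos : 0 < eta)
  (fmon : monotone f) (fsub : submodular f) (f0 : f set0 = 0)
  (fgap : forall S, Q - eta <= f S -> Q <= f S)
  (ca : consistency_aware H f Q) (alpha1 : 1 <= alpha)
  (gr : approx_greedy f Q alpha (utility cost H f Q) A)
  (feas : feasible H f Q A').

Let u := utility cost H f Q.
Let maxu S := maxseq [seq u y S | y <- enum X].
Let OPT := costA cost H A'.
Let K := 2 * Num.min (g_cost cost) (R_cost cost).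
Local Notation F := (fun T => Num.min (f T) Q).

Lemma x0_ex : exists x0 : X, True.
Proof.
have [_ /(_ _)] := gr set0; rewrite f0 => /(_ Qpos) [x _]; by exists x.
Qed.

Lemma V_memP h S : reflect (h \in H /\ forall p, p \in S -> h p.1 = p.2) (h \in V H S).
Proof.
rewrite /V inE; apply: (iffP andP) => [[hH /forall_inP Hp]|[hH Hp]]; split => //.
  by move=> p /Hp /eqP.
by apply/forall_inP => p /Hp ->.
Qed.

Lemma u_ge0 x S : 0 <= u x S.
Proof.
apply: minseq_ge => // r /mapP [h _ ->]; apply: divr_ge0; last exact: ltW.
exact: delta_fq_ge0.
Qed.

Lemma u_le x S h : h \in V H S -> u x S <= delta F (x, h x) S / cost x (h x).
Proof. by move=> hV; apply: minseq_le; apply: map_f; rewrite mem_enum. Qed.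

Lemma u_att x S : V H S != set0 ->
  exists h, h \in V H S /\ u x S = delta F (x, h x) S / cost x (h x).
Proof.
move=> Vn; have : [seq delta F (x, h x) S / cost x (h x) | h <- enum (V H S)] != [::].
  case: (set_0Vmem (V H S)) Vn => [->|[h hV] _]; first by rewrite eqxx.
  by case E: (enum _) => //; move: (mem_enum (mem (V H S)) h); rewrite E hV.
move/minseq_mem => /mapP [h hV E]; exists h; split; first by rewrite mem_enum in hV.
exact: E.
Qed.

Lemma maxu_ge x S : u x S <= maxu S.
Proof. by apply: maxseq_ge; apply: map_f; rewrite mem_enum. Qed.

Lemma maxu_ge0 S : 0 <= maxu S.
Proof. have [x0 _] := x0_ex; exact: le_trans (u_ge0 x0 S) (maxu_ge x0 S). Qed.

Lemma OPT_ge h : h \in H -> costS cost (Sh A' h) <= OPT.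
Proof. by move=> hH; apply: maxseq_ge; apply: map_f; rewrite mem_enum. Qed.

Lemma OPT_ge0 : 0 <= OPT.
Proof.
case E: (enum H) => [|h s].
  by rewrite /OPT /costA E /maxseq /= lexx.
have : h \in enum H by rewrite E mem_head.
rewrite mem_enum => hH.
exact: le_trans (costS_ge0 cpos _) (OPT_ge hH).
Qed.

Lemma K_ge1 : 1 <= Num.min (g_cost cost) (R_cost cost).
Proof.
have [x0 _] := x0_ex.
rewrite le_min (g_cost_ge1 cpos Y2 x0) (R_cost_ge1 cpos Y2 x0) //.
Qed.


Lemma V_anti S1 S2 : S1 \subset S2 -> V H S2 \subset V H S1.
Proof.
move=> S12; apply/subsetP => h /V_memP [hH Hp]; apply/V_memP; split => // p pS.
by apply: Hp; apply: (subsetP S12).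
Qed.

Lemma path_stops S (ga : {ffun X -> Y}) :
  exists k, (A' (run A' ga k) == None) || (V H (S :|: run A' ga k) == set0).
Proof.
suff: forall n k, (#|V H (S :|: run A' ga k)| <= n)%N ->
   exists k, (A' (run A' ga k) == None) || (V H (S :|: run A' ga k) == set0).
  by move=> /(_ _ 0%N (leqnn _)).
elim=> [|n IH] k Hk.
  by exists k; move: Hk; rewrite leqn0 cards_eq0 => ->; rewrite orbT.
case: (pselect (exists k', (k <= k')%N /\ V H (S :|: run A' ga k') != V H (S :|: run A' ga k))).
  move=> [k' [kk' Hne]]; apply: (IH k').
  have sub : V H (S :|: run A' ga k') \subset V H (S :|: run A' ga k).
    by apply: V_anti; apply: setUS; apply: run_sub.
  have : V H (S :|: run A' ga k') \proper V H (S :|: run A' ga k) by rewrite properEneq Hne sub.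
  move/proper_card => lt; rewrite -ltnS; exact: leq_trans lt Hk.
move=> Hall.
have Heq : forall k', (k <= k')%N -> V H (S :|: run A' ga k') = V H (S :|: run A' ga k).
  move=> k' kk'; apply/eqP; apply: contrapT => Hne; apply: Hall; exists k'; split => //.
  by apply/negP.
case: (set_0Vmem (V H (S :|: run A' ga k))) => [E|[h hV]].
  by exists k; rewrite E eqxx orbT.
have [hH _] := V_memP _ _ hV.
have cons : forall m p, p \in run A' ga m -> h p.1 = p.2.
  move=> m p pm.
  have : h \in V H (S :|: run A' ga (maxn k m)) by rewrite Heq ?leq_maxl.
  move/V_memP => [_]; apply; apply/setUP; right.
  by apply: (subsetP (run_sub _ _ (leq_maxr k m))).
have agr : forall m, run A' h m = run A' ga m by move=> m; apply: (run_agree (cons m)).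
have [m Hm] := feas.1 h hH; exists m; by rewrite -agr Hm.
Qed.


Lemma key S : f S < Q -> Q - f S <= maxu S * (K * OPT).
Proof.
move=> fS.
have Vn : V H S != set0.
  by apply/eqP => /ca /(lt_le_trans fS); rewrite ltxx.
have Hex : forall x, exists h, h \in V H S /\
    u x S = delta F (x, h x) S / cost x (h x) by move=> x; apply: u_att.
have [hx Hhx] := choice Hex.
pose ga := [ffun x => hx x x].
have gaE : forall x, ga x = hx x x by move=> x; rewrite ffunE.
have uga : forall x, u x S = delta F (x, ga x) S / cost x (ga x).
  by move=> x; rewrite gaE; case: (Hhx x).
have exP := path_stops S ga.
have [kmin PK Kmin] := ex_minnP exP.
set T := run A' ga kmin.
have notP : forall j, (j < kmin)%N ->
    A' (run A' ga j) != None /\ V H (S :|: run A' ga j) != set0.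
  move=> j jk; have : ~~ ((A' (run A' ga j) == None) || (V H (S :|: run A' ga j) == set0)).
    by apply/negP => /Kmin; rewrite leqNgt jk.
  by rewrite negb_or => /andP.
have OPT0 := OPT_ge0.
have m1 := K_ge1.
have [fT cT] : Q <= f (S :|: T) /\ costS cost T <= K * OPT.
  have Kge : OPT <= K * OPT.
    have h0 : 0 <= (Num.min (g_cost cost) (R_cost cost) - 1) * OPT.
      by apply: mulr_ge0 => //; rewrite subr_ge0.
    rewrite mulrBl mul1r in h0.
    rewrite /K -mulrA; lra.
  case: (boolP (V H (S :|: T) == set0)) => [/eqP E|En]; last first.
    move: PK; rewrite (negbTE En) orbF => /eqP AT.
    have [E0|[h hV]] := set_0Vmem (V H (S :|: T)); first by rewrite E0 eqxx in En.
    have [hH hcons] := V_memP _ _ hV.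
    have hT : forall p, p \in T -> h p.1 = p.2.
      by move=> p pT; apply: hcons; rewrite inE pT orbT.
    have agr := run_agree hT.
    have ShE : Sh A' h = T.
      rewrite /T -(agr kmin (leqnn _)); apply: Sh_eq; first by rewrite agr.
      by move=> j jk; rewrite agr ?(ltnW jk) //; case: (notP j jk).
    split.
      apply: le_trans (feas.2 h hH) _; rewrite ShE; apply: fmon; exact: subsetUr.
    by apply: le_trans Kge; rewrite -ShE; apply: OPT_ge.
  split; first exact: ca E.
  have kpos : (0 < kmin)%N.
    rewrite lt0n; apply/eqP => k0; move: E; rewrite /T k0 /= setU0 => E.
    by rewrite E eqxx in Vn.
  have kE := prednK kpos; set k' := kmin.-1 in kE.
  have k'lt : (k' < kmin)%N by rewrite -kE.
  have [Ak' Vk'] := notP k' k'lt.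
  case Ex: (A' (run A' ga k')) Ak' => [x|] // _.
  set T' := run A' ga k' in Ex Vk'.
  have TE : T = (x, ga x) |: T' by rewrite /T -kE; apply: run_some.
  have [E0|[h hV]] := set_0Vmem (V H (S :|: T')); first by rewrite E0 eqxx in Vk'.
  have [hH hcons] := V_memP _ _ hV.
  have hT' : forall p, p \in T' -> h p.1 = p.2.
    by move=> p pT; apply: hcons; rewrite inE pT orbT.
  have hxne : h x != ga x.
    apply/eqP => hxe.
    have : h \in V H (S :|: T).
      apply/V_memP; split => // p; rewrite TE !inE => /orP [pS|/orP [/eqP -> //|pT]].
        by apply: hcons; rewrite inE pS.
      exact: hT'.
    by rewrite E inE.
  have agr := run_agree hT'.
  have shsup : run A' h k'.+1 \subset Sh A' h.
    apply: (Sh_sup (feas.1 h hH)) => j jk; rewrite agr //.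
    have jlt : (j < kmin)%N by apply: leq_ltn_trans k'lt; rewrite -ltnS.
    by case: (notP j jlt).
  have runh : run A' h k'.+1 = (x, h x) |: T'.
    by rewrite (run_some (k := k') (x := x)) agr.
  have xhnot : (x, h x) \notin T'.
    by apply/negP => /run_pairs /= hxe; rewrite hxe eqxx in hxne.
  have OPT1 : cost x (h x) + costS cost T' <= OPT.
    rewrite -(costS_U1 cost xhnot) /=; apply: le_trans (OPT_ge hH).
    by apply: (costS_sub cpos); rewrite -runh.
  have cTl : costS cost T <= cost x (ga x) + costS cost T'.
    by rewrite TE; apply: costS_U1_le.
  have T'0 := costS_ge0 cpos T'.
  have ch0 := cpos x (h x).
  have RB : costS cost T <= OPT + R_cost cost * OPT.
    have h1 := R_cost_le cpos Y2 x (ga x) (h x).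
    have R0 : 0 <= R_cost cost by have [x0 _] := x0_ex; have := R_cost_ge1 cpos Y2 x0; lra.
    have : R_cost cost * cost x (h x) <= R_cost cost * OPT by apply: ler_wpM2l => //; lra.
    lra.
  have GB : costS cost T <= OPT + g_cost cost * OPT.
    have [Hx1 _] := Hhx x.
    set h' := hx x in Hx1.
    have [h'H h'S] := V_memP _ _ Hx1.
    have nc : ~ (forall p, p \in T -> h' p.1 = p.2).
      move=> Hc; have : h' \in V H (S :|: T).
        apply/V_memP; split => // p; rewrite inE => /orP [pS|pT]; [exact: h'S | exact: Hc].
      by rewrite E inE.
    have [j [xj [jk Axj hc hne]]] := first_disagree nc.
    have jk' : (j < k')%N.
      rewrite ltn_neqAle -ltnS kE jk andbT; apply/eqP => jE.
      move: Axj; rewrite jE -/T' Ex => -[xE].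
      by move: hne; rewrite -xE gaE eqxx.
    have T'sh : T' \subset Sh A' h.
      by apply: subset_trans shsup; rewrite runh; apply: subsetUr.
    have c1 : cost xj (ga xj) <= OPT.
      apply: le_trans (OPT_ge hH); apply: (costS_mem cpos (z := (xj, ga xj))).
      apply: (subsetP T'sh); apply: (subsetP (run_sub _ _ jk')).
      by rewrite (run_some Axj) setU11.
    have agr' := run_agree hc.
    have c2 : cost xj (h' xj) <= OPT.
      apply: le_trans (OPT_ge h'H); apply: (costS_mem cpos (z := (xj, h' xj))).
      have Hn : forall i, (i < j.+1)%N -> A' (run A' h' i) != None.
        move=> i ii; rewrite agr' //.
        have ilt : (i < kmin)%N.
          by apply: leq_ltn_trans (ltn_trans jk' k'lt); rewrite -ltnS.
        by case: (notP i ilt).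
      apply: (subsetP (Sh_sup (feas.1 h' h'H) Hn)).
      by rewrite (run_some (k := j) (x := xj)) ?agr' ?setU11.
    have phiO : phi_min cost <= OPT.
      apply: le_trans (phi_min_le cost xj) _.
      case: (phi_two cost Y2 xj hne) => hp; lra.
    have [x0 _] := x0_ex.
    have g1 := g_cost_ge1 cpos Y2 x0.
    have cm := c_max_ge cost x (ga x).
    rewrite (c_max_g cpos Y2 x0) in cm.
    have : g_cost cost * phi_min cost <= g_cost cost * OPT by apply: ler_wpM2l => //; lra.
    lra.
  rewrite /K -mulrA.
  have : costS cost T <= OPT + Num.min (g_cost cost) (R_cost cost) * OPT.
    by rewrite minEle; case: ifP.
  have h0 : 0 <= (Num.min (g_cost cost) (R_cost cost) - 1) * OPT.
    by apply: mulr_ge0 => //; rewrite subr_ge0.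
  rewrite mulrBl mul1r in h0.
  lra.
have sumT : Q - f S <= \sum_(z in T) delta F z S.
  have := fq_sum Q fmon fsub S T.
  have -> : Num.min (f (S :|: T)) Q = Q by apply/min_idPr.
  have -> : Num.min (f S) Q = f S by apply/min_idPl; apply: ltW.
  by [].
have : \sum_(z in T) delta F z S <= maxu S * costS cost T.
  rewrite /costS mulr_sumr; apply: ler_sum => z zT.
  have z2 := run_pairs zT.
  case: z zT z2 => x y /= _ ->.
  have e : delta F (x, ga x) S = u x S * cost x (ga x).
    by rewrite uga divfK //; apply: lt0r_neq0.
  rewrite e; apply: ler_wpM2r; [exact: ltW | exact: maxu_ge].
have := maxu_ge0 S => mu0.
have : maxu S * costS cost T <= maxu S * (K * OPT) by apply: ler_wpM2l.
lra.
Qed.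


Let M := alpha * (K * OPT).

Lemma alpha_pos : 0 < alpha.
Proof. exact: lt_le_trans ltr01 alpha1. Qed.

Lemma KO_pos : 0 < K * OPT.
Proof.
have := key (S := set0); rewrite f0 subr0 => /(_ Qpos) hk.
have K0 : 0 <= K by have := K_ge1; rewrite /K; lra.
have KO0 : 0 <= K * OPT by apply: mulr_ge0 => //; exact: OPT_ge0.
rewrite lt_neqAle KO0 andbT; apply/eqP => E; move: hk; rewrite -E mulr0 => h; by move: (lt_le_trans Qpos h); rewrite ltxx.
Qed.

Lemma M_pos : 0 < M.
Proof. by apply: mulr_gt0; [exact: lt_le_trans ltr01 alpha1 | exact: KO_pos]. Qed.

Lemma run_cons h k p : p \in run A h k -> h p.1 = p.2.
Proof. by move/run_pairs ->. Qed.

Lemma step h t : h \in H -> f (run A h t) < Q ->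
  exists x, [/\ A (run A h t) = Some x, (x, h x) \notin run A h t,
    run A h t.+1 = (x, h x) |: run A h t &
    cost x (h x) * (Q - F (run A h t)) <= M * (F (run A h t.+1) - F (run A h t))].
Proof.
move=> hH fS; set S := run A h t.
have [_ /(_ fS) [x [Ax hu]]] := gr S.
have hV : h \in V H S by apply/V_memP; split => //; exact: run_cons.
have ule := u_le x hV.
have kk := key fS.
have FS : F S = f S by apply/min_idPl; apply: ltW.
have runE : run A h t.+1 = (x, h x) |: S by apply: run_some.
have c0 := cpos x (h x).
have d0 : 0 <= delta F (x, h x) S by exact: delta_fq_ge0.
have KO := KO_pos.
have mu0 := maxu_ge0 S.
have u0 := u_ge0 x S.
have h2 : maxu S <= alpha * u x S.
  by move: hu; rewrite -ler_pdivlMl; [rewrite invrK | rewrite invr_gt0; exact: alpha_pos].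
have h3 : u x S * cost x (h x) <= delta F (x, h x) S.
  by rewrite -ler_pdivlMr.
have ineq : cost x (h x) * (Q - F S) <= M * delta F (x, h x) S.
  rewrite FS; apply: (@le_trans _ _ (cost x (h x) * (maxu S * (K * OPT)))).
    by apply: ler_wpM2l => //; apply: ltW.
  apply: (@le_trans _ _ (cost x (h x) * (alpha * u x S * (K * OPT)))).
    apply: ler_wpM2l; first exact: ltW.
    by apply: ler_wpM2r => //; apply: ltW.
  rewrite /M.
  have -> : cost x (h x) * (alpha * u x S * (K * OPT)) =
            alpha * (K * OPT) * (u x S * cost x (h x)) by ring.
  apply: ler_wpM2l => //; apply: mulr_ge0; [exact: ltW alpha_pos | exact: ltW].
exists x; split => //; last by rewrite runE.
apply/negP => xin.
move: ineq; rewrite /delta (setUidPr _) ?sub1set // subrr mulr0 FS => h4.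
have : 0 < cost x (h x) * (Q - f S) by apply: mulr_gt0 => //; lra.
lra.
Qed.


Lemma card_grow h : h \in H -> forall t,
  (forall j, (j < t)%N -> f (run A h j) < Q) -> (t <= #|run A h t|)%N.
Proof.
move=> hH; elim=> [|t IH] Hj //.
have ft : f (run A h t) < Q by apply: Hj.
have [x [Ax xn runE _]] := step hH ft.
rewrite runE cardsU1 xn /= add1n ltnS; apply: IH => j jt; apply: Hj; exact: ltnW.
Qed.

Lemma term h : h \in H -> terminates_on A h.
Proof.
move=> hH; case: (pselect (exists k, Q <= f (run A h k))) => [[k Hk]|Hn].
  by exists k; rewrite ((gr _).1 Hk).
exfalso.
have Hall : forall j, f (run A h j) < Q.
  by move=> j; rewrite ltNge; apply/negP => Hj; apply: Hn; exists j.
have := card_grow hH (t := #|[set: X * Y]|.+1) (fun j _ => Hall j).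
by rewrite ltnNge subset_leq_card ?subsetT.
Qed.

Lemma F_le_Q S : Num.min (f S) Q <= Q.
Proof. by rewrite ge_min lexx orbT. Qed.

Lemma inv h : h \in H -> forall t, (forall j, (j < t)%N -> f (run A h j) < Q) ->
  Q - F (run A h t) <= Q * expR (- (costS cost (run A h t) / M)).
Proof.
move=> hH; have Mp := M_pos; elim=> [|t IH] Hj.
  rewrite /= f0 /costS big_set0 mul0r oppr0 expR0 mulr1.
  have -> : Num.min 0 Q = 0 by apply/min_idPl; apply: ltW.
  by rewrite subr0.
have ft : f (run A h t) < Q by apply: Hj.
have IH' := IH (fun j jt => Hj j (ltnW jt)).
have [x [Ax xn runE ineq]] := step hH ft.
set D := Q - F (run A h t) in IH' ineq.
set D' := Q - F (run A h t.+1).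
set C := costS cost (run A h t) in IH'.
set c := cost x (h x) in ineq.
have Cnew : costS cost (run A h t.+1) = c + C by rewrite runE costS_U1.
rewrite Cnew.
have D0 : 0 <= D by rewrite /D subr_ge0 F_le_Q.
have c0 : 0 < c by apply: cpos.
have ineq' : c * D <= M * (D - D').
  have -> : D - D' = F (run A h t.+1) - F (run A h t) by rewrite /D /D'; ring.
  exact: ineq.
have e1 : D' <= D * (1 - c / M).
  have : c * D / M <= D - D' by rewrite ler_pdivrMr // [X in _ <= X]mulrC.
  have -> : c * D / M = D * (c / M) by rewrite mulrAC mulrC.
  rewrite mulrBr mulr1; lra.
have e2 : 1 - c / M <= expR (- (c / M)) by exact: expR_ge1Dx.
have e3 : D * (1 - c / M) <= D * expR (- (c / M)) by apply: ler_wpM2l.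
have e4 : D * expR (- (c / M)) <= Q * expR (- (C / M)) * expR (- (c / M)).
  by apply: ler_wpM2r => //; apply: ltW; apply: expR_gt0.
have -> : - ((c + C) / M) = - (C / M) + - (c / M) by rewrite mulrDl; ring.
rewrite expRD mulrA.
lra.
Qed.


Lemma eta_lt_Q : eta < Q.
Proof.
rewrite ltNge; apply/negP => hq.
have : Q - eta <= f set0 by rewrite f0 subr_le0.
move/fgap; rewrite f0 => h0; move: (lt_le_trans Qpos h0); by rewrite ltxx.
Qed.

Lemma ln_ge0 : 0 <= ln (Q / eta).
Proof.
apply: ltW; apply: ln_gt0; rewrite ltr_pdivlMr // mul1r; exact: eta_lt_Q.
Qed.

Lemma cost_bound h : h \in H -> costS cost (Sh A h) <= M * (ln (Q / eta) + 1).
Proof.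
move=> hH; have [m [ShE Am Hm]] := Sh_spec (term hH).
have fj : forall j, (j < m)%N -> f (run A h j) < Q.
  move=> j jm; rewrite ltNge; apply/negP => Hq; have := Hm j jm; by rewrite ((gr _).1 Hq).
case: m ShE Am Hm fj => [|m'] ShE Am Hm fj.
  exfalso; move: Am => /=; have [_ /(_ _)] := gr set0; rewrite f0 => /(_ Qpos) [x [Ax _]].
  by rewrite Ax.
have fm : f (run A h m') < Q by apply: fj.
have I := inv hH (fun j (jm : (j < m')%N) => fj j (ltnW jm)).
have [x [Ax xn runE ineq]] := step hH fm.
have Mp := M_pos.
have FE : Num.min (f (run A h m')) Q = f (run A h m') by apply/min_idPl; apply: ltW.
rewrite FE in I ineq.
set D := Q - f (run A h m') in I ineq.
set C := costS cost (run A h m') in I.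
set c := cost x (h x) in ineq.
have Deta : eta < D.
  rewrite ltNge; apply/negP => hD.
  have : Q - eta <= f (run A h m') by rewrite /D in hD; lra.
  move/fgap => hq; move: (lt_le_trans fm hq); by rewrite ltxx.
have cM : c <= M.
  have h1 := F_le_Q (run A h m'.+1).
  have : M * (Num.min (f (run A h m'.+1)) Q - f (run A h m')) <= M * D.
    by apply: ler_wpM2l; [exact: ltW | rewrite /D; lra].
  move=> h2; have h3 : c * D <= M * D by exact: le_trans ineq h2.
  by rewrite -(ler_pM2r (x := D)) //; apply: lt_trans etapos Deta.
have CM : C < M * ln (Q / eta).
  have e0 : 0 < expR (- (C / M)) by apply: expR_gt0.
  have h1 : eta < Q * expR (- (C / M)) by exact: lt_le_trans Deta I.
  have : ln eta < ln (Q * expR (- (C / M))).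
    rewrite ltr_ln //; rewrite posrE //; apply: mulr_gt0 => //.
  rewrite lnM ?posrE // expRK => h2.
  rewrite ln_div ?posrE //.
  have : C / M < ln Q - ln eta by lra.
  by rewrite ltr_pdivrMr // mulrC.
rewrite ShE runE costS_U1 // -/c -/C mulrDr mulr1.
lra.
Qed.

Lemma final : terminates H A /\
    costA cost H A <=
      2 * Num.min (g_cost cost) (R_cost cost) * alpha * (ln (Q / eta) + 1)
        * costA cost H A'.
Proof.
split; first by move=> h; apply: term.
have -> : 2 * Num.min (g_cost cost) (R_cost cost) * alpha * (ln (Q / eta) + 1)
        * costA cost H A' = M * (ln (Q / eta) + 1) by rewrite /M /K /OPT; ring.
apply: maxseq_le.
  apply: mulr_ge0; first exact: ltW M_pos.
  have := ln_ge0; lra.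
move=> r /mapP [h hin ->]; apply: cost_bound; by rewrite mem_enum in hin.
Qed.

End Main.


Theorem theorem3 (R : realType) (X Y : finType)
  (H : {set {ffun X -> Y}}) (cost : X -> Y -> R)
  (f : {set X * Y} -> R) (Q eta alpha : R) (A : algo X Y) :
  (1 < #|Y|)%N ->
  (forall x y, 0 < cost x y) ->
  (forall S, 0 <= f S) ->
  0 < Q -> 0 < eta ->
  monotone f -> submodular f -> f set0 = 0 ->
  (forall S, Q - eta <= f S -> Q <= f S) ->
  consistency_aware H f Q ->
  1 <= alpha ->
  approx_greedy f Q alpha (utility cost H f Q) A ->
  forall A' : algo X Y, feasible H f Q A' ->
    terminates H A /\
    costA cost H A <=
      2 * Num.min (g_cost cost) (R_cost cost) * alpha * (ln (Q / eta) + 1)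
        * costA cost H A'.
Proof.
move=> Y2 cpos fge0 Qpos etapos fmon fsub f0 fgap ca alpha1 gr A' feas.
exact: (final Y2 cpos Qpos etapos fmon fsub f0 fgap ca alpha1 gr feas).
Qed.
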